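(* Assume the linear model $X_a=X^a\theta^0_a+\epsilon_a$ and that $S_0$ satisfies the $\Delta$-compatibility condition for some $\Delta>0$ with constant $\phi_{0,a}>0$. Then on the event $\Lambda_a$, for $\lambda\ge2\lambda_0$, $\mu\ge2\mu_0$ and $\lambda\ge(3+\frac{14}{\Delta})B\mu$, $$\frac1n\|X^a(\hat\theta^{\lambda,\mu}_a-\theta^0_a)\|_2^2+(\lambda-3B\mu)\|\hat\theta^{\lambda,\mu}_a-\theta^0_a\|_1\le\frac{s_0(2\lambda+B\mu)^2}{\phi_{0,a}^2}.$$
   Context: Fix a node $a$. $X_a\in\mathbb{R}^n$ is the observed $a$-th variable, $X^a$ the $n\times p$ observation matrix with $a$-th column set to zero, $X^a_j$ its $j$-th column, $\theta^0_a$ the true coefficient vector, $\epsilon_a$ the noise. $S_0=\{j:\theta^0_{a,j}\neq0\}$, $s_0=|S_0|$. For $S\subseteq\{1,\dots,p\}$, $\theta_S$ has entries $\theta_j\mathbf{1}\{j\in S\}$ and $\theta_{S^c}$ entries $\theta_j\mathbf{1}\{j\notin S\}$. The local difference matrix $D^a$: from a known local neighborhood graph with edge set $E_{\rm local}$, $D$ has a row $e_i-e_j$ per edge $\{i,j\}$, $i<j$; $D^a$ keeps rows with $a$-th entry $0$. $B$ bounds the number of nonzero entries in any column of $D^a$. $\hat\theta^{\lambda,\mu}_a=\operatorname{argmin}_{\theta_a}\big[\frac1n\|X_a-X^a\theta_a\|_2^2+\lambda\|\theta_a\|_1+\mu\|D^a\theta_a\|_1\big]$. For $\lambda_0,\mu_0>0$,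 $\Lambda_a:=\{\max_{j\neq a}\frac2n|\epsilon_a'X^a_j|\le\lambda_0+B\mu_0\}$. $\Delta$-compatibility condition: for all $\theta\in\mathbb{R}^p$ with $\|\theta_{S_0^c}\|_1\le(3+\Delta)\|\theta_{S_0}\|_1$ one has $\|\theta_{S_0}\|_1^2\le\frac{s_0\,\theta'X^{a\prime}X^a\theta}{n\phi_{0,a}^2}$. *)

(* Defs.v *)
From HB Require Import structures.
From mathcomp Require Import all_boot all_order all_algebra.
Set Implicit Arguments. Unset Strict Implicit. Unset Printing Implicit Defensive.
Import Order.TTheory GRing.Theory Num.Theory.
Local Open Scope ring_scope.

Section Defs.
Variable R : realFieldType.

Definition l1norm (p : nat) (v : 'cV[R]_p) : R := \sum_(i < p) `|v i 0|.

Definition sqnorm (m : nat) (v : 'cV[R]_m) : R := \sum_(i < m) (v i 0) ^+ 2.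

Definition restr (p : nat) (S : {set 'I_p}) (v : 'cV[R]_p) : 'cV[R]_p :=
  \col_j (if j \in S then v j 0 else 0).

(* X^a : the observation matrix with the a-th column set to zero *)
Definition Xminus (n p : nat) (a : 'I_p) (X : 'M[R]_(n, p)) : 'M[R]_(n, p) :=
  \matrix_(i, j) (if j == a then 0 else X i j).

Definition Xcol (n p : nat) (a : 'I_p) (X : 'M[R]_(n, p)) (j : 'I_p) : 'cV[R]_n :=
  col j (Xminus a X).

Definition dotv (m : nat) (u v : 'cV[R]_m) : R := \sum_(i < m) u i 0 * v i 0.

End Defs.

(* Rows of D^a: edges {i,j} of the local graph, i < j, not incident to a
   (the row e_i - e_j has a-th entry 0 iff i <> a and j <> a). *)
Definition Darow (p : nat) (E : rel 'I_p) (a : 'I_p) (i j : 'I_p) : bool :=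
  [&& (i < j)%N, E i j, i != a & j != a].

Definition fusedpen (R : realFieldType) (p : nat) (E : rel 'I_p) (a : 'I_p)
  (v : 'cV[R]_p) : R :=
  \sum_(i < p) \sum_(j < p | Darow E a i j) `|v i 0 - v j 0|.

(* number of nonzero entries of column k of D^a *)
Definition Dacolcount (p : nat) (E : rel 'I_p) (a : 'I_p) (k : 'I_p) : nat :=
  #|[set ij : 'I_p * 'I_p | Darow E a ij.1 ij.2 && ((k == ij.1) || (k == ij.2))]|.

Definition objective (R : realFieldType) (n p : nat) (E : rel 'I_p) (a : 'I_p)
  (X : 'M[R]_(n, p)) (lam mu : R) (theta : 'cV[R]_p) : R :=
  (n%:R)^-1 * sqnorm (col a X - Xminus a X *m theta)
  + lam * l1norm theta + mu * fusedpen E a theta.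

Definition supp (R : realFieldType) (p : nat) (v : 'cV[R]_p) : {set 'I_p} :=
  [set j | v j 0 != 0].

(* Main.v *)
Require Import Defs.
From HB Require Import structures.
From mathcomp Require Import all_boot all_order all_algebra.
From mathcomp Require Import ring lra.
Import Order.TTheory GRing.Theory Num.Theory.
Local Open Scope ring_scope.
Lemma key (R : realFieldType) (nr sZ se G N0 Nh F0 Fh A C lam lam0 mu mu0 Br Delta phi s : R) :
  0 < nr ->
  nr^-1 * (se - 2 * G + sZ) + lam * Nh + mu * Fh <= nr^-1 * se + lam * N0 + mu * F0 ->
  2 / nr * `|G| <= (lam0 + Br * mu0) * (A + C) ->
  F0 - Fh <= Br * (A + C) ->
  N0 - Nh <= A - C ->
  0 <= A -> 0 <= C -> 0 <= sZ -> 0 <= Br -> 0 <= s ->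
  (C <= (3 + Delta) * A -> A ^+ 2 <= (s * sZ) / (nr * phi ^+ 2)) ->
  0 < lam0 -> 0 < mu0 -> 0 < Delta -> 0 < phi ->
  2 * lam0 <= lam -> 2 * mu0 <= mu -> (3 + 14 / Delta) * Br * mu <= lam ->
  nr^-1 * sZ + (lam - 3 * Br * mu) * (A + C) <= s * (2 * lam + Br * mu) ^+ 2 / phi ^+ 2.
Proof.
move=> hn hopt hG hF hN hA hC hsZ hB hs hcomp hl0 hm0 hD hphi hl hm hlb.
set Q := nr^-1 * sZ.
have hQ0 : 0 <= Q by rewrite /Q mulr_ge0 // invr_ge0 ltW.
set b := Br * mu.
have hb0 : 0 <= b by rewrite /b mulr_ge0 //; lra.
have h1 : Q <= 2 * nr^-1 * G + lam * (N0 - Nh) + mu * (F0 - Fh).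
  rewrite /Q; move: hopt; rewrite ?mulrDr ?mulrBr; lra.
have h2 : 2 * nr^-1 * G <= (lam / 2 + b / 2) * (A + C).
  apply: le_trans (_ : 2 / nr * `|G| <= _); first first.
    apply: le_trans hG _; apply: ler_wpM2r; first lra.
    rewrite /b; have : Br * mu0 <= Br * (mu / 2) by apply: ler_wpM2l => //; lra.
    lra.
  apply: ler_wpM2l; first by rewrite mulr_ge0 // invr_ge0 ltW.
  exact: ler_norm.
have h3 : mu * (F0 - Fh) <= b * (A + C).
  by rewrite /b [Br * mu]mulrC -mulrA; apply: ler_wpM2l => //; lra.
have h4 : lam * (N0 - Nh) <= lam * (A - C).
  by apply: ler_wpM2l => //; lra.
have h5 : Q <= (3 * lam / 2 + 3 * b / 2) * A + (3 * b / 2 - lam / 2) * C.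
  move: h1 h2 h3 h4; rewrite ?mulrDr ?mulrBr ?mulrDl ?mulrBl; lra.
have hD14 : 3 * Delta * b + 14 * b <= Delta * lam.
  have : Delta * ((3 + 14 / Delta) * b) <= Delta * lam.
    by apply: ler_wpM2l; [lra| rewrite /b mulrA].
  have -> : Delta * ((3 + 14 / Delta) * b) = 3 * Delta * b + 14 * b.
    by field; rewrite gt_eqF.
  done.
have hpos : 0 < lam - 3 * b.
  case: (ltrP 0 b) => hb.
    have : 0 < Delta * (lam - 3 * b) by nra.
    by rewrite pmulr_rgt0.
  have -> : b = 0 by lra.
  lra.
have hcone : C <= (3 + Delta) * A.
  rewrite -(ler_pM2l hpos).
  have : (lam - 3 * b) * C <= 3 * (lam + b) * A by nra.
  have : 3 * (lam + b) * A <= (lam - 3 * b) * ((3 + Delta) * A).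
    rewrite mulrA; apply: ler_wpM2r => //; nra.
  lra.
have hAc : A ^+ 2 <= (s / phi ^+ 2) * Q.
  move: (hcomp hcone); rewrite /Q invfM; congr (_ <= _); field.
  by rewrite !gt_eqF // exprn_gt0.
set c := s / phi ^+ 2.
have {}hAc : A ^+ 2 <= c * Q by exact: hAc.
have hc0 : 0 <= c by rewrite /c divr_ge0 // exprn_ge0 // ltW.
have h6 : 4 * lam * A <= Q + 4 * lam ^+ 2 * c.
  case: (ltrP 0 c) => hc.
    have : 0 <= c * (Q + 4 * lam ^+ 2 * c - 4 * lam * A).
      have -> : c * (Q + 4 * lam ^+ 2 * c - 4 * lam * A) = (c * Q - A ^+ 2) + (A - 2 * lam * c) ^+ 2 by ring.
      by apply: addr_ge0; [rewrite subr_ge0 | exact: sqr_ge0].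
    by rewrite pmulr_rge0 //; lra.
  have c0 : c = 0 by lra.
  rewrite c0 in hAc; rewrite mul0r in hAc.
  have A0 : A = 0 by nra.
  by rewrite A0 c0; lra.
have h7 : 4 * lam ^+ 2 * c <= (2 * lam + b) ^+ 2 * c.
  by apply: ler_wpM2r => //; nra.
have -> : s * (2 * lam + Br * mu) ^+ 2 / phi ^+ 2 = (2 * lam + b) ^+ 2 * c.
  by rewrite /c /b mulrA [s * _]mulrC -mulrA.
have -> : 3 * Br * mu = 3 * b by rewrite /b mulrA.
clear -h5 h6 h7 hQ0 hA hC. clearbody Q b c. lra.
Qed.

Lemma sqnormB (R : realFieldType) m (u v : 'cV[R]_m) :
  sqnorm (u - v) = sqnorm u - 2 * dotv u v + sqnorm v.
Proof.
rewrite /sqnorm /dotv mulr_sumr -sumrB -big_split /=.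
by apply: eq_bigr => i _; rewrite !mxE; ring.
Qed.

Lemma sqnorm_ge0 (R : realFieldType) m (u : 'cV[R]_m) : 0 <= sqnorm u.
Proof. by rewrite /sqnorm sumr_ge0 // => i _; rewrite sqr_ge0. Qed.

Lemma dotv_mul (R : realFieldType) n p (a : 'I_p) (X : 'M[R]_(n, p)) eps d :
  dotv eps (Xminus a X *m d) = \sum_j d j 0 * dotv eps (Xcol a X j).
Proof.
rewrite /dotv.
under eq_bigr do rewrite mxE mulr_sumr.
rewrite exchange_big /=; apply: eq_bigr => j _; rewrite mulr_sumr.
by apply: eq_bigr => i _; rewrite /Xcol !mxE; ring.
Qed.

Lemma l1norm_ge0 (R : realFieldType) p (v : 'cV[R]_p) : 0 <= l1norm v.
Proof. by rewrite /l1norm sumr_ge0. Qed.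

Lemma l1split (R : realFieldType) p (S : {set 'I_p}) (v : 'cV[R]_p) :
  l1norm v = l1norm (restr S v) + l1norm (restr (~: S) v).
Proof.
rewrite /l1norm -big_split; apply: eq_bigr => i _; rewrite !mxE inE.
by case: (i \in S) => /=; rewrite normr0 ?addr0 ?add0r.
Qed.

Lemma l1diff (R : realFieldType) p (t0 th : 'cV[R]_p) :
  l1norm t0 - l1norm th <=
  l1norm (restr (supp t0) (th - t0)) - l1norm (restr (~: supp t0) (th - t0)).
Proof.
rewrite /l1norm -!sumrB; apply: ler_sum => i _; rewrite /supp !mxE !inE.
case: eqP => [->|_] /=; rewrite ?normr0 ?subr0 ?sub0r ?add0r ?subr0 //.
by rewrite distrC lerB_dist.
Qed.

Lemma pair2 (R : realFieldType) p (f : 'I_p -> R) (i j : 'I_p) : i != j ->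
  f i + f j = \sum_(k | (k == i) || (k == j)) f k.
Proof.
move=> hij; rewrite (bigD1 i) ?eqxx //= (bigD1 j) /=; last by rewrite eqxx orbT eq_sym.
rewrite big1 ?addr0 // => k /andP [/andP [/orP [] -> //] ]; by rewrite ?andbF.
Qed.

Lemma fused_bound (R : realFieldType) p (E : rel 'I_p) (a : 'I_p) (B : nat) (t0 th : 'cV[R]_p) :
  (forall k : 'I_p, (Dacolcount E a k <= B)%N) ->
  fusedpen E a t0 - fusedpen E a th <= B%:R * l1norm (th - t0).
Proof.
move=> hB.
set f := fun k : 'I_p => `|(th - t0) k 0|.
have h1 : fusedpen E a t0 - fusedpen E a th <=
    \sum_(i < p) \sum_(j < p | Darow E a i j) (f i + f j).
  rewrite /fusedpen -sumrB; apply: ler_sum => i _; rewrite -sumrB.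
  apply: ler_sum => j _; rewrite /f !mxE.
  have e : t0 i 0 - t0 j 0 = (th i 0 - th j 0) + (- (th i 0 - t0 i 0)) + (th j 0 - t0 j 0) by ring.
  rewrite e.
  have h := ler_normD ((th i 0 - th j 0) + (- (th i 0 - t0 i 0))) (th j 0 - t0 j 0).
  have h' := ler_normD (th i 0 - th j 0) (- (th i 0 - t0 i 0)).
  rewrite normrN in h'; lra.
apply: le_trans h1 _.
rewrite pair_big_dep /=.
have h2 : forall q : 'I_p * 'I_p, Darow E a q.1 q.2 ->
    f q.1 + f q.2 = \sum_(k | (k == q.1) || (k == q.2)) f k.
  move=> [i j] /= /andP [hlt _]; apply: pair2; by rewrite neq_ltn hlt.
rewrite (eq_bigr _ h2) (exchange_big_dep xpredT) //=.
rewrite /l1norm mulr_sumr; apply: ler_sum => k _.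
rewrite sumr_const /f /= -[leLHS]mulr_natl; apply: ler_wpM2r => //.
rewrite ler_nat; have := hB k; by rewrite /Dacolcount cardsE.
Qed.

Lemma dot_bound (R : realFieldType) n p (a : 'I_p) (X : 'M[R]_(n, p)) eps d (K : R) :
  0 <= K ->
  (forall j : 'I_p, j != a -> 2 / n%:R * `|dotv eps (Xcol a X j)| <= K) ->
  2 / n%:R * `|dotv eps (Xminus a X *m d)| <= K * l1norm d.
Proof.
move=> hK hL; rewrite dotv_mul /l1norm mulr_sumr.
have hc : 0 <= 2 / n%:R :> R by rewrite divr_ge0 // ler0n.
apply: le_trans (_ : 2 / n%:R * \sum_j `|d j 0 * dotv eps (Xcol a X j)| <= _).
  by apply: ler_wpM2l => //; apply: ler_norm_sum.
rewrite mulr_sumr; apply: ler_sum => j _; rewrite normrM mulrCA [K * _]mulrC.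
apply: ler_wpM2l => //.
case: (eqVneq j a) => [->|hja]; last exact: hL.
have -> : dotv eps (Xcol a X a) = 0.
  by rewrite /dotv big1 // => i _; rewrite /Xcol !mxE eqxx mulr0.
by rewrite normr0 mulr0.
Qed.

Theorem mainTheorem13 (R : realFieldType) (n p : nat) (a : 'I_p)
  (X : 'M[R]_(n, p)) (theta0 : 'cV[R]_p) (eps : 'cV[R]_n)
  (E : rel 'I_p) (B : nat)
  (Delta phi0 lam0 mu0 lam mu : R) (thetahat : 'cV[R]_p) :
  (0 < n)%N ->
  symmetric E ->
  (* B bounds the number of nonzero entries of any column of D^a *)
  (forall k : 'I_p, (Dacolcount E a k <= B)%N) ->
  (* linear model *)
  col a X = Xminus a X *m theta0 + eps ->
  (* Delta-compatibility condition for S_0 *)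
  0 < Delta -> 0 < phi0 ->
  (forall theta : 'cV[R]_p,
     l1norm (restr (~: supp theta0) theta)
       <= (3 + Delta) * l1norm (restr (supp theta0) theta) ->
     l1norm (restr (supp theta0) theta) ^+ 2
       <= (#|supp theta0|%:R * sqnorm (Xminus a X *m theta))
          / (n%:R * phi0 ^+ 2)) ->
  0 < lam0 -> 0 < mu0 ->
  (* the event Lambda_a *)
  (forall j : 'I_p, j != a ->
     2 / n%:R * `|dotv eps (Xcol a X j)| <= lam0 + B%:R * mu0) ->
  2 * lam0 <= lam -> 2 * mu0 <= mu ->
  (3 + 14 / Delta) * B%:R * mu <= lam ->
  (* thetahat is a minimizer of the penalized objective *)
  (forall theta : 'cV[R]_p,
     objective E a X lam mu thetahat <= objective E a X lam mu theta) ->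
  (n%:R)^-1 * sqnorm (Xminus a X *m (thetahat - theta0))
    + (lam - 3 * B%:R * mu) * l1norm (thetahat - theta0)
  <= #|supp theta0|%:R * (2 * lam + B%:R * mu) ^+ 2 / phi0 ^+ 2.
Proof.
move=> hn _ hB hY hD hphi hcomp hl0 hm0 hLam hl hm hlb hopt.
have hopt' := hopt theta0.
have e1 : col a X - Xminus a X *m thetahat = eps - Xminus a X *m (thetahat - theta0).
  by rewrite hY mulmxBr; apply/matrixP => i j; rewrite !mxE; ring.
have e0 : col a X - Xminus a X *m theta0 = eps.
  by rewrite hY; apply/matrixP => i j; rewrite !mxE; ring.
rewrite /objective e1 e0 sqnormB in hopt'.
rewrite (@l1split _ _ (supp theta0) (thetahat - theta0)).
have hnr : 0 < n%:R :> R by rewrite ltr0n.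
apply: (key _ _ _ _ _ _ _ _ _ _ _ _ _ _ _ _ _ _ _ hnr hopt').
- rewrite -l1split; apply: (@dot_bound R n p a X eps _ (lam0 + B%:R * mu0)); last exact: hLam.
  by rewrite addr_ge0 ?mulr_ge0 ?ler0n // ltW.
- by rewrite -l1split; apply: fused_bound.
- exact: l1diff.
- exact: l1norm_ge0.
- exact: l1norm_ge0.
- exact: sqnorm_ge0.
- by rewrite ler0n.
- by rewrite ler0n.
- exact: hcomp.
- exact: hl0.
- exact: hm0.
- exact: hD.
- exact: hphi.
- exact: hl.
- exact: hm.
- exact: hlb.
Qed.
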